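(* Let $\mathcal{X}$ be a set and $\mathcal{H}\subseteq\{0,1\}^{\mathcal{X}}$. Player $\mathrm{P_A}$ has a winning strategy in the Gale–Stewart game $\mathfrak{G}$ if and only if $\mathcal{H}$ has an infinite Littlestone tree.
   Context: For $x_1,\ldots,x_t\in\mathcal{X}$ and $y_1,\ldots,y_t\in\{0,1\}$, let $\mathcal{H}_{x_1,y_1,\ldots,x_t,y_t}=\{h\in\mathcal{H}:h(x_s)=y_s,\ s\le t\}$. The game $\mathfrak{G}$ has two players $\mathrm{P_A}$ and $\mathrm{P_L}$; in each round $\tau\ge1$, $\mathrm{P_A}$ chooses $\xi_\tau\in\mathcal{X}$, then $\mathrm{P_L}$ chooses $\eta_\tau\in\{0,1\}$. $\mathrm{P_L}$ wins if $\mathcal{H}_{\xi_1,\eta_1,\ldots,\xi_\tau,\eta_\tau}=\varnothing$ for some finite $\tau$; otherwise $\mathrm{P_A}$ wins. A strategy for a player is a sequence of functions giving that player's move in round $\tau$ as a function of all previous moves (and, for $\mathrm{P_L}$, the current move $\xi_\tau$); it is winning if it wins against every play of the opponent. Littlestone tree of depth $d\le\infty$: a collection $\{x_{\mathbf u}:0\le k<d,\ \mathbf u\in\{0,1\}^k\}\subseteq\mathcal{X}$ such that for every $\mathbf y\in\{0,1\}^d$ and $n<d$ there is $h\in\mathcal{H}$ with $h(x_{\mathbf y_{\le k}})=y_{k+1}$ for $0\le k\le n$, $\mathbf y_{\le k}=(y_1,\ldots,y_k)$. Infinite: $d=\infty$. *)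

(* Defs.v *)
From mathcomp Require Import all_boot.
Set Implicit Arguments. Unset Strict Implicit. Unset Printing Implicit Defensive.

(* h is consistent with the labelled sample s = [(x_1,y_1);...;(x_t,y_t)],
   i.e. h ∈ H_{x_1,y_1,...,x_t,y_t} when h ∈ H. *)
Definition consistent (X : Type) (h : X -> bool) (s : seq (X * bool)) : bool :=
  all (fun p => h p.1 == p.2) s.

Definition version_nonempty (X : Type) (H : (X -> bool) -> Prop)
  (s : seq (X * bool)) : Prop :=
  exists h, H h /\ consistent h s.

(* Strategy of P_A: move in round tau as a function of all previous moves
   (xi_1,eta_1,...,xi_{tau-1},eta_{tau-1}); the round is the length + 1. *)
Definition stratA (X : Type) := seq (X * bool) -> X.
Definition stratL (X : Type) := seq (X * bool) -> X -> bool.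

Fixpoint play (X : Type) (sA : stratA X) (sL : stratL X) (n : nat)
  : seq (X * bool) :=
  match n with
  | 0 => [::]
  | n'.+1 => let h := play sA sL n' in
             let x := sA h in rcons h (x, sL h x)
  end.

Definition A_wins_play (X : Type) (H : (X -> bool) -> Prop)
  (sA : stratA X) (sL : stratL X) : Prop :=
  forall tau : nat, version_nonempty H (play sA sL tau).

Definition winning_stratA (X : Type) (H : (X -> bool) -> Prop)
  (sA : stratA X) : Prop :=
  forall sL : stratL X, A_wins_play H sA sL.

Definition PA_has_winning_strategy (X : Type) (H : (X -> bool) -> Prop)
  : Prop := exists sA : stratA X, winning_stratA H sA.

(* Prefix y_{<=k} = (y_1,...,y_k) of y : nat -> bool (0-indexed: y 0 = y_1). *)
Definition prefix (y : nat -> bool) (k : nat) : seq bool := mkseq y k.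

(* Infinite Littlestone tree: nodes x_u for all finite binary strings u,
   such that for every infinite path y and every n there is h ∈ H with
   h(x_{y_{<=k}}) = y_{k+1} for 0 <= k <= n. *)
Definition infinite_Littlestone_tree (X : Type) (H : (X -> bool) -> Prop)
  (x : seq bool -> X) : Prop :=
  forall (y : nat -> bool) (n : nat),
    exists h, H h /\ forall k, k <= n -> h (x (prefix y k)) = y k.

Definition has_infinite_Littlestone_tree (X : Type) (H : (X -> bool) -> Prop)
  : Prop := exists x : seq bool -> X, infinite_Littlestone_tree H x.

(* Main.v *)
Require Import Defs.
From mathcomp Require Import all_boot.

Lemma mkseqSr (T : Type) (f : nat -> T) m : mkseq f m.+1 = rcons (mkseq f m) (f m).
Proof. by rewrite /mkseq -addn1 iotaD map_cat /= cats1. Qed.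

Lemma play_eq (X : Type) (sA : stratA X) (sL : stratL X) m :
  play sA sL m = mkseq (fun k => (sA (play sA sL k),
                      sL (play sA sL k) (sA (play sA sL k)))) m.
Proof. elim: m => [//|m IH]; by rewrite mkseqSr /= -IH. Qed.

Lemma consistent_mkseq (X : Type) (h : X -> bool) (f : nat -> X * bool) m :
  consistent h (mkseq f m) <-> (forall k, k < m -> h (f k).1 = (f k).2).
Proof.
rewrite /consistent; elim: m => [|m IH]; first by split => // _ k.
rewrite mkseqSr all_rcons; split.
- move=> /andP[/eqP Hm /IH Hk] k; rewrite ltnS leq_eqVlt => /orP[/eqP->//|].
  exact: Hk.
- move=> Hk; apply/andP; split; first by apply/eqP; apply: Hk.
  by apply/IH => k Hkm; apply: Hk; apply: ltnW.
Qed.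

Definition hist (X : Type) (sA : stratA X) (u : seq bool) : seq (X * bool) :=
  foldl (fun h b => rcons h (sA h, b)) [::] u.
Arguments hist {X}.

Theorem mainTheorem4 (X : Type) (H : (X -> bool) -> Prop) :
  PA_has_winning_strategy H <-> has_infinite_Littlestone_tree H.
Proof.
split.
- move=> [sA Hwin]; exists (fun u => sA (hist sA u)) => y n.
  pose sL : stratL X := fun h _ => y (size h).
  have Hsz : forall k, size (play sA sL k) = k.
    by elim=> [//|k IH] /=; rewrite size_rcons IH.
  have Hp : forall k, play sA sL k = hist sA (Defs.prefix y k).
    elim=> [//|k IH]; rewrite /Defs.prefix mkseqSr /hist foldl_rcons.
    by rewrite /= -/(hist sA _) -IH /sL Hsz.
  have [h [Hh Hc]] := Hwin sL n.+1.
  exists h; split => // k Hk.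
  move: Hc; rewrite play_eq => /consistent_mkseq Hc.
  have := Hc k Hk; rewrite /= /sL Hsz Hp => ->; by [].
- move=> [x Htree].
  exists (fun h => x (map snd h)) => sL tau.
  set sA : stratA X := fun h => x (map snd h).
  pose y k := sL (play sA sL k) (sA (play sA sL k)).
  have Hm : forall k, map snd (play sA sL k) = Defs.prefix y k.
    move=> k; rewrite play_eq /prefix /mkseq -map_comp; by apply: eq_map.
  have [h [Hh Hc]] := Htree y tau.
  exists h; split => //; rewrite play_eq; apply/consistent_mkseq => k Hk /=.
  rewrite -/(y k) {1}/sA Hm; apply: Hc; exact: ltnW.
Qed.
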